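(* Let $N$ be a positive integer, $C=N+1$, and $0<\eta\le\frac{1}{270C}$. Let $b_1,b_2\in\mathbb{R}^A$ and $a_0\in\Delta_A$ with all coordinates positive, and define $$a_1=\arg\min_{a\in\Delta_A}F_1(a),\ F_1(a)=\langle a,b_1\rangle+D_\psi(a,a_0);\qquad a_2=\arg\min_{a\in\Delta_A}F_2(a),\ F_2(a)=\langle a,b_2\rangle+D_\psi(a,a_0).$$ If $\|b_1-b_2\|_{\nabla^{-2}\psi(a_1)}\le 12\sqrt\eta\,C$, then for all $i\in\{1,\dots,A\}$, $|a_{2,i}-a_{1,i}|\le 60\,\eta\,C\,a_{1,i}$.
   Context: $\Delta_A$ is the probability simplex in $\mathbb{R}^A$. $\psi(x)=\frac1\eta\sum_{i=1}^A\log\frac{1}{x_i}$ for $x$ with positive coordinates, $D_\psi(x,x')=\psi(x)-\psi(x')-\langle\nabla\psi(x'),x-x'\rangle$. $\nabla^2\psi(x)$ is the diagonal matrix with entries $\frac{1}{\eta x_i^2}$ and $\nabla^{-2}\psi(x)$ its inverse (diagonal entries $\eta x_i^2$). For a positive semidefinite matrix $M$, $\|v\|_M=\sqrt{v^\top Mv}$. *)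

(* Defs.v *)
From HB Require Import structures.
From mathcomp Require Import all_boot all_order all_algebra.
From mathcomp Require Import all_classical all_reals all_analysis.
Set Implicit Arguments. Unset Strict Implicit. Unset Printing Implicit Defensive.
Import Order.TTheory GRing.Theory Num.Theory.
Local Open Scope ring_scope.

Section Defs.
Variables (R : realType) (A : nat).

Definition in_simplex (x : 'I_A -> R) : Prop :=
  (forall i, 0 <= x i) /\ \sum_(i < A) x i = 1.

Definition pos_coords (x : 'I_A -> R) : Prop := forall i, 0 < x i.

Definition psi (eta : R) (x : 'I_A -> R) : R :=
  eta^-1 * \sum_(i < A) ln ((x i)^-1).

Definition grad_psi (eta : R) (x : 'I_A -> R) (i : 'I_A) : R :=
  - (eta * x i)^-1.

Definition breg (eta : R) (x x' : 'I_A -> R) : R :=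
  psi eta x - psi eta x' - \sum_(i < A) grad_psi eta x' i * (x i - x' i).

Definition Fobj (eta : R) (b a0 a : 'I_A -> R) : R :=
  \sum_(i < A) a i * b i + breg eta a a0.

(* a is the argmin of F over Delta_A (on the domain of psi: positive coords) *)
Definition is_argmin (eta : R) (b a0 a : 'I_A -> R) : Prop :=
  in_simplex a /\ pos_coords a /\
  forall a', in_simplex a' -> pos_coords a' -> Fobj eta b a0 a <= Fobj eta b a0 a'.

(* ||v||_{nabla^{-2} psi(x)}, the matrix being diag(eta x_i^2) *)
Definition local_norm_inv_hess (eta : R) (x v : 'I_A -> R) : R :=
  Num.sqrt (\sum_(i < A) v i * (eta * x i ^+ 2) * v i).

End Defs.

(* Main.v *)
Require Import Defs.
From HB Require Import structures.
From mathcomp Require Import all_boot all_order all_algebra.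
From mathcomp Require Import all_classical all_reals all_analysis.
From mathcomp Require Import ring lra.
Import Order.TTheory GRing.Theory Num.Theory.
Local Open Scope ring_scope.

Section S.
Variable R : realType.

Lemma hmono (a b : R) : 0 < 1 + a -> 0 < 1 + b -> a <= b -> a / (1 + a) <= b / (1 + b).
Proof.
move=> ha hb ab.
rewrite ler_pdivrMr // mulrAC ler_pdivlMr //; nra.
Qed.

Arguments hmono {a b}.
Lemma hlow (e : R) : -1/2 <= e -> e - 2 * e ^+ 2 <= e / (1 + e).
Proof.
move=> he. have h1 : 0 < 1 + e by lra.
rewrite ler_pdivlMr //. have := sqr_ge0 e. nra.
Qed.

Lemma hup (e : R) : 0 < 1 + e -> e / (1 + e) <= e.
Proof.
move=> h1. rewrite ler_pdivrMr //. have := sqr_ge0 e. nra.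
Qed.

Lemma term_le_sum (A : nat) (F : 'I_A -> R) j : (forall i, 0 <= F i) -> F j <= \sum_i F i.
Proof.
move=> F0; rewrite (bigD1 j) //= lerDl; apply: sumr_ge0 => i _; exact: F0.
Qed.
Arguments term_le_sum {A F}.

Lemma subr_ge0_le (a b : R) : a <= b -> 0 <= b - a.
Proof. by rewrite subr_ge0. Qed.
Arguments subr_ge0_le {a b}.

Lemma stab (A : nat) (x s : 'I_A -> R) (t d : R) (i0 : 'I_A) :
  (forall i, 0 < x i) -> 0 < d -> d <= 2/45 ->
  \sum_i s i ^+ 2 <= d ^+ 2 ->
  (forall i, 0 < 1 + (t * x i - s i)) ->
  \sum_i x i * ((t * x i - s i) / (1 + (t * x i - s i))) = 0 ->
  forall i, `|t * x i - s i| <= 3 * d.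
Proof.
move=> xp dp d45 hs2 h1 h0.
set Q := \sum_i x i ^+ 2.
have Q0 : 0 < Q.
  have := term_le_sum i0 (fun j => sqr_ge0 (x j)); rewrite -/Q.
  have := exprn_gt0 2 (xp i0). lra.
set q := Num.sqrt Q.
have q0 : 0 < q by rewrite sqrtr_gt0.
have qQ : q ^+ 2 = Q by rewrite sqr_sqrtr // ltW.
have xq : forall i, x i <= q.
  move=> i; have := term_le_sum i (fun j => sqr_ge0 (x j)); rewrite -/Q -qQ => h.
  have := xp i; nra.
have hs : forall i, `|s i| <= d.
  move=> i; have := term_le_sum i (fun j => sqr_ge0 (s j)) => h.
  have h2 : s i ^+ 2 <= d ^+ 2 by apply: le_trans hs2.
  rewrite ler_norml; apply/andP; split; nra.
have nsq : forall i, `|s i| ^+ 2 = s i ^+ 2 by move=> i; rewrite real_normK // num_real.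
have hxs : \sum_i x i * `|s i| <= d * q.
  have qd0 : 0 < q * d by rewrite mulr_gt0.
  have : (2 * q * d) * \sum_i x i * `|s i| <= 2 * d ^+ 2 * q ^+ 2.
    rewrite mulr_sumr.
    apply: (@le_trans _ _ (\sum_i (d ^+ 2 * x i ^+ 2 + q ^+ 2 * s i ^+ 2))).
      apply: ler_sum => i _. have := sqr_ge0 (d * x i - q * `|s i|).
      have := nsq i. nra.
    rewrite big_split /= -!mulr_sumr -/Q -qQ.
    have : q ^+ 2 * \sum_i s i ^+ 2 <= q ^+ 2 * d ^+ 2 by rewrite ler_wpM2l // sqr_ge0.
    lra.
  set S := \sum_i _ => h. nra.
have hxsu : \sum_i x i * s i <= d * q.
  apply: le_trans hxs; apply: ler_sum => i _; apply: ler_wpM2l; first exact: ltW (xp i).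
  exact: ler_norm.
have hxsl : - (d * q) <= \sum_i x i * s i.
  rewrite lerNl -sumrN; apply: le_trans hxs; apply: ler_sum => i _.
  rewrite -mulrN; apply: ler_wpM2l; first exact: ltW (xp i). rewrite -normrN. exact: ler_norm.
have hxss : \sum_i x i * s i ^+ 2 <= d ^+ 2 * q.
  apply: (@le_trans _ _ (d * \sum_i x i * `|s i|)); last first.
    have := ler_wpM2l (ltW dp) hxs. nra.
  rewrite mulr_sumr; apply: ler_sum => i _.
  have h := mulr_ge0 (mulr_ge0 (ltW (xp i)) (normr_ge0 (s i))) (subr_ge0_le (hs i)).
  rewrite -nsq. nra.
have hx3 : \sum_i x i ^+ 3 <= q * Q.
  rewrite /Q mulr_sumr; apply: ler_sum => i _.
  have := xq i; have := xp i; rewrite exprS. have := sqr_ge0 (x i). nra.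
set t0 := 2 * d / q.
have t0q : t0 * q = 2 * d by rewrite /t0 divfK // gt_eqF.
have t00 : 0 < t0 by rewrite /t0 divr_gt0 // mulr_gt0.
have htq : - (2 * d) <= t * q <= 2 * d.
  apply/andP; split; rewrite leNgt; apply/negP => hc.
  -
    have tt0 : t <= - t0 by nra.
    have : \sum_i x i * ((t * x i - s i) / (1 + (t * x i - s i)))
           <= \sum_i x i * (- t0 * x i - s i).
      apply: ler_sum => i _; apply: ler_wpM2l; first exact: ltW (xp i).
      have e1 : t * x i - s i <= - t0 * x i - s i by have := xp i; nra.
      have h1' : 0 < 1 + (- t0 * x i - s i) by have := h1 i; lra.
      have := hmono (h1 i) h1' e1; have := hup _ h1'; lra.
    have -> : \sum_i x i * (- t0 * x i - s i) = - t0 * Q - \sum_i x i * s i.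
      rewrite /Q mulr_sumr -sumrB; apply: eq_bigr => i _; ring.
    rewrite h0. have : t0 * Q = 2 * d * q by rewrite -qQ -t0q; ring.
    nra.
  -
    have tt0 : t0 <= t by nra.
    have : \sum_i (t0 * x i ^+ 2 - x i * s i - 4 * t0 ^+ 2 * x i ^+ 3 - 4 * (x i * s i ^+ 2))
           <= \sum_i x i * ((t * x i - s i) / (1 + (t * x i - s i))).
      apply: ler_sum => i _.
      have e0l : - d <= t0 * x i - s i.
        have := xp i; have := hs i; rewrite ler_norml => /andP[_ ?]; nra.
      apply: (@le_trans _ _ (x i * ((t0 * x i - s i) - 2 * (t0 * x i - s i) ^+ 2))).
        have := mulr_ge0 (ltW (xp i)) (sqr_ge0 (t0 * x i + s i)). nra.
      apply: ler_wpM2l; first exact: ltW (xp i).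
      have hl := hlow (t0 * x i - s i) ltac:(lra).
      have e1 : t0 * x i - s i <= t * x i - s i by have := xp i; nra.
      have h1' : 0 < 1 + (t0 * x i - s i) by lra.
      have := hmono h1' (h1 i) e1; lra.
    rewrite h0 !big_split /= !sumrN -!mulr_sumr -/Q.
    have : t0 * Q = 2 * d * q by rewrite -qQ -t0q; ring.
    have : t0 ^+ 2 * (q * Q) = 4 * d ^+ 2 * q.
      rewrite -qQ.
      have -> : t0 ^+ 2 * (q * q ^+ 2) = (t0 * q) ^+ 2 * q by ring.
      rewrite t0q; ring.
    have := ler_wpM2l (sqr_ge0 t0) hx3.
    have : 0 < d * q * (1 - 20 * d) by rewrite !mulr_gt0 //; lra.
    nra.
move=> i; rewrite ler_norml.
have := hs i; rewrite ler_norml => /andP[sl su].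
have := xq i; have := xp i; move: htq => /andP[l u].
have htx : - (2 * d) <= t * x i <= 2 * d.
  have hqx := subr_ge0_le (xq i).
  case: (lerP 0 t) => ht; apply/andP; split.
  - have := mulr_ge0 ht (ltW (xp i)); lra.
  - have := mulr_ge0 ht hqx; nra.
  - have := mulr_ge0 hqx (subr_ge0_le (ltW ht)); nra.
  - have := mulr_ge0 (ltW (xp i)) (subr_ge0_le (ltW ht)); nra.
move: htx => /andP[??]. move=> *; apply/andP; split; lra.
Qed.

Lemma Fobj_sum (A : nat) (eta : R) (b a0 a : 'I_A -> R) :
  Fobj eta b a0 a = \sum_i (a i * b i + eta^-1 * ln (a i)^-1 - eta^-1 * ln (a0 i)^-1
                          + (eta * a0 i)^-1 * (a i - a0 i)).
Proof.
rewrite /Fobj /breg /psi /grad_psi !mulr_sumr -!sumrB -big_split /=.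
by apply: eq_bigr => i _; ring.
Qed.

Lemma lnle (y : R) : 0 < y -> ln y <= y - 1.
Proof.
move=> y0; have := @le_ln1Dx R (y - 1).
have e : 1 + (y - 1) = y by ring.
rewrite e; apply; lra.
Qed.

Lemma term_bound (eta a a' c : R) : 0 < eta -> 0 < a -> a / 2 <= a' ->
  (a' - a) * c + eta^-1 * (ln a'^-1 - ln a^-1)
  <= (a' - a) * (c - (eta * a)^-1) + 2 * eta^-1 * ((a' - a) ^+ 2 / a ^+ 2).
Proof.
move=> e0 a0 aa.
have a'0 : 0 < a' by lra.
rewrite !lnV ?posrE // opprK.
have -> : - ln a' + ln a = ln (a / a') by rewrite ln_div ?posrE //; ring.
have hl := lnle _ (divr_gt0 a0 a'0).
have key : a / a' - 1 <= - (a' - a) / a + 2 * ((a' - a) ^+ 2 / a ^+ 2).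
  rewrite -subr_le0.
  have -> : a / a' - 1 - (- (a' - a) / a + 2 * ((a' - a) ^+ 2 / a ^+ 2))
     = (a' - a) ^+ 2 * (a - 2 * a') / (a ^+ 2 * a').
    by field; apply/andP; split; rewrite gt_eqF.
  rewrite ler_pdivrMr ?mulr_gt0 ?exprn_gt0 // mul0r.
  apply: mulr_ge0_le0; first exact: sqr_ge0.
  lra.
have ei0 : 0 < eta^-1 by rewrite invr_gt0.
have := ler_wpM2l (ltW ei0) (le_trans hl key).
set X := (a' - a) ^+ 2 / a ^+ 2.
have -> : (a' - a) * (c - (eta * a)^-1) + 2 * eta^-1 * X
   = (a' - a) * c + eta^-1 * (- (a' - a) / a + 2 * X).
  by field; apply/andP; split; rewrite gt_eqF.
lra.
Qed.

Lemma sum_delta (A : nat) (j : 'I_A) (F : 'I_A -> R) :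
  \sum_i (i == j)%:R * F i = F j.
Proof.
rewrite (bigD1 j) //= eqxx mul1r big1 ?addr0 // => i /negbTE ->; by rewrite mul0r.
Qed.

Lemma G_zero (tau G K : R) : 0 < tau -> 0 <= K ->
  (forall t, - tau <= t <= tau -> 0 <= t * G + t ^+ 2 * K) -> G = 0.
Proof.
move=> tp K0 H; apply/eqP; apply/negPn/negP => Gn.
have Ga : 0 < `|G| by rewrite normr_gt0.
set D := `|G| + tau * K + 1.
have D0 : 0 < D by rewrite /D; have := mulr_ge0 (ltW tp) K0; lra.
set t := - (tau * G) / D.
have tD : t * D = - (tau * G) by rewrite /t divfK // gt_eqF.
have GG := ler_norm G; have GN : - G <= `|G| by rewrite -normrN ler_norm.
have : - tau <= t <= tau.
  apply/andP; split.
  - rewrite -(ler_pM2r D0) tD /D. have := mulr_ge0 (ltW tp) (mulr_ge0 (ltW tp) K0).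
    have := mulr_ge0 (ltW tp) (subr_ge0_le GG). nra.
  - rewrite -(ler_pM2r D0) tD /D. have := mulr_ge0 (ltW tp) (mulr_ge0 (ltW tp) K0).
    have := mulr_ge0 (ltW tp) (subr_ge0_le GN). nra.
move/H => h.
have h2 : 0 <= D ^+ 2 * (t * G + t ^+ 2 * K) by apply: mulr_ge0 => //; exact: sqr_ge0.
have E0 : D ^+ 2 * (t * G + t ^+ 2 * K) = (t * D) * G * D + (t * D) ^+ 2 * K by ring.
rewrite E0 in h2.
rewrite tD in h2.
have GG2 : G ^+ 2 = `|G| ^+ 2 by rewrite real_normK // num_real.
have : (- (tau * G)) * G * D + (- (tau * G)) ^+ 2 * K = - (tau * G ^+ 2 * (`|G| + 1)).
  rewrite /D; ring.
move=> E; rewrite E in h2.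
have : 0 < tau * G ^+ 2 * (`|G| + 1).
  apply: mulr_gt0; last lra.
  by apply: mulr_gt0 => //; rewrite GG2 exprn_gt0.
lra.
Qed.

Lemma sum_delta1 (A : nat) (j : 'I_A) : \sum_i (i == j)%:R = 1 :> R.
Proof.
rewrite (bigD1 j) //= eqxx big1 ?addr0 // => i /negbTE ->; by [].
Qed.

Lemma foc (A : nat) (eta : R) (b a0 a : 'I_A -> R) (j k : 'I_A) :
  0 < eta -> is_argmin eta b a0 a ->
  b j + (eta * a0 j)^-1 - (eta * a j)^-1 = b k + (eta * a0 k)^-1 - (eta * a k)^-1.
Proof.
move=> e0 [[anneg asum] [apos amin]].
have [->//|jk] := eqVneq j k.
set g := fun i => b i + (eta * a0 i)^-1 - (eta * a i)^-1.
set v := fun i : 'I_A => (i == j)%:R - (i == k)%:R : R.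
set K := \sum_i 2 * eta^-1 * ((v i) ^+ 2 / a i ^+ 2).
set m := Num.min (a j) (a k).
have mj : m <= a j by rewrite /m ge_min lexx.
have mk : m <= a k by rewrite /m ge_min lexx orbT.
have m0 : 0 < m by rewrite /m lt_min !apos.
have tp : 0 < m / 2 by lra.
have K0 : 0 <= K.
  apply: sumr_ge0 => i _; apply: mulr_ge0; first by rewrite mulr_ge0 // invr_ge0 ltW.
  by apply: divr_ge0; apply: sqr_ge0.
suff : \sum_i v i * g i = 0.
  rewrite /v; under eq_bigr do rewrite mulrBl.
  rewrite sumrB !sum_delta => /eqP; rewrite subr_eq0 => /eqP.
  by rewrite /g.
apply: (G_zero _ _ _ tp K0) => t /andP[tl tu].
set a' := fun i => a i + t * v i.
have half : forall i, a i / 2 <= a' i.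
  move=> i; rewrite /a' /v; have := apos i.
  have [->|nij] := eqVneq i j.
    rewrite (negbTE jk) mulr1n mulr0n; lra.
  have [->|nik] := eqVneq i k.
    rewrite mulr1n mulr0n; lra.
  rewrite !mulr0n; lra.
have a'pos : pos_coords a'.
  by move=> i; have := half i; have := apos i; lra.
have a'simp : in_simplex a'.
  split; first by move=> i; exact: ltW.
  rewrite /a' big_split /= asum -mulr_sumr /v sumrB !sum_delta1; ring.
have := amin a' a'simp a'pos; rewrite !Fobj_sum -subr_ge0 -sumrB => h.
apply: (le_trans h).
rewrite /K !mulr_sumr -big_split; apply: ler_sum => i _.
have E : a' i * b i + eta^-1 * ln (a' i)^-1 - eta^-1 * ln (a0 i)^-1 +
      (eta * a0 i)^-1 * (a' i - a0 i) -
      (a i * b i + eta^-1 * ln (a i)^-1 - eta^-1 * ln (a0 i)^-1 +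
       (eta * a0 i)^-1 * (a i - a0 i))
   = (a' i - a i) * (b i + (eta * a0 i)^-1) + eta^-1 * (ln (a' i)^-1 - ln (a i)^-1).
  by ring.
rewrite E.
have tb := term_bound _ _ _ (b i + (eta * a0 i)^-1) e0 (apos i) (half i).
have E2 : (a' i - a i) * (b i + (eta * a0 i)^-1 - (eta * a i)^-1) + 2 * eta^-1 * ((a' i - a i) ^+ 2 / a i ^+ 2)
   = t * (v i * g i) + t ^+ 2 * (2 * eta^-1 * (v i ^+ 2 / a i ^+ 2)).
  by rewrite /a' /g; ring.
rewrite E2 in tb. exact: tb.
Qed.


End S.
Arguments foc {R A eta b a0 a} j k.
Arguments stab {R A x s t d} i0.

Theorem mainTheorem7 (R : realType) (A N : nat) (eta : R)
  (b1 b2 a0 a1 a2 : 'I_A -> R) :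
  (0 < N)%N ->
  0 < eta -> eta <= (270 * (N.+1)%:R)^-1 ->
  in_simplex a0 -> pos_coords a0 ->
  is_argmin eta b1 a0 a1 ->
  is_argmin eta b2 a0 a2 ->
  local_norm_inv_hess eta a1 (fun i => b1 i - b2 i)
    <= 12 * Num.sqrt eta * (N.+1)%:R ->
  forall i : 'I_A, `|a2 i - a1 i| <= 60 * eta * (N.+1)%:R * a1 i.
Proof.
move=> _ e0 heta _ _ h1 h2 hn i.
set C : R := (N.+1)%:R.
have C0 : 0 < C by rewrite /C ltr0Sn.
have ec : eta * C <= 1 / 270.
  have p : 0 < 270 * C by rewrite mulr_gt0.
  have := ler_wpM2r (ltW p) heta; rewrite mulVf ?gt_eqF //. lra.
have ec0 : 0 < eta * C by rewrite mulr_gt0.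
have x0 := h1.2.1; have y0 := h2.2.1.
have f1 := fun k => foc k i e0 h1.
have f2 := fun k => foc k i e0 h2.
set l1 := b1 i + (eta * a0 i)^-1 - (eta * a1 i)^-1.
set l2 := b2 i + (eta * a0 i)^-1 - (eta * a2 i)^-1.
set t := eta * (l1 - l2).
set s := fun k => eta * a1 k * (b1 k - b2 k).
have ee : forall k, t * a1 k - s k = a1 k / a2 k - 1.
  move=> k; have := f1 k; have := f2 k; rewrite -/l1 -/l2 => E2 E1.
  have Hx : (eta * a1 k)^-1 = b1 k + (eta * a0 k)^-1 - l1 by rewrite -E1; ring.
  have Hy : (eta * a2 k)^-1 = b2 k + (eta * a0 k)^-1 - l2 by rewrite -E2; ring.
  have -> : a1 k / a2 k - 1 = eta * a1 k * ((eta * a2 k)^-1 - (eta * a1 k)^-1).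
    by field; rewrite !gt_eqF //=.
  rewrite Hx Hy /t /s; ring.
have one : forall k, 1 + (a1 k / a2 k - 1) = a1 k / a2 k by move=> k; ring.
have hpos : forall k, 0 < 1 + (t * a1 k - s k).
  by move=> k; rewrite ee one divr_gt0.
have hsum : \sum_k a1 k * ((t * a1 k - s k) / (1 + (t * a1 k - s k))) = 0.
  under eq_bigr => k _ do rewrite ee one.
  have -> : \sum_k a1 k * ((a1 k / a2 k - 1) / (a1 k / a2 k)) = \sum_k (a1 k - a2 k).
    apply: eq_bigr => k _; field; rewrite !gt_eqF //=.
  by rewrite sumrB h1.1.2 h2.1.2 subrr.
have S0 : 0 <= \sum_k (b1 k - b2 k) * (eta * a1 k ^+ 2) * (b1 k - b2 k).
  apply: sumr_ge0 => k _.
  have -> : (b1 k - b2 k) * (eta * a1 k ^+ 2) * (b1 k - b2 k) = eta * (a1 k * (b1 k - b2 k)) ^+ 2 by ring.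
  by apply: mulr_ge0; [exact: ltW | exact: sqr_ge0].
have hS : \sum_k (b1 k - b2 k) * (eta * a1 k ^+ 2) * (b1 k - b2 k) <= 144 * eta * C ^+ 2.
  move: hn; rewrite /local_norm_inv_hess -/C.
  set S := \sum_k _ => hn0.
  have hn : Num.sqrt S <= 12 * Num.sqrt eta * C := hn0.
  have r0 := sqrtr_ge0 S; have := sqr_sqrtr S0.
  have := sqr_sqrtr (ltW e0); have := sqrtr_ge0 eta.
  set r := Num.sqrt S; set q := Num.sqrt eta => q0 qq rr.
  have : r ^+ 2 <= (12 * q * C) ^+ 2.
    rewrite -subr_ge0.
    have -> : (12 * q * C) ^+ 2 - r ^+ 2 = (12 * q * C - r) * (12 * q * C + r) by ring.
    apply: mulr_ge0; first by rewrite subr_ge0.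
    apply: addr_ge0; last exact: sqrtr_ge0. by rewrite !mulr_ge0 // ltW.
  rewrite rr; have -> : (12 * q * C) ^+ 2 = 144 * q ^+ 2 * C ^+ 2 by ring.
  by rewrite qq.
have hs2 : \sum_k s k ^+ 2 <= (12 * eta * C) ^+ 2.
  have -> : \sum_k s k ^+ 2 = eta * \sum_k (b1 k - b2 k) * (eta * a1 k ^+ 2) * (b1 k - b2 k).
    by rewrite mulr_sumr; apply: eq_bigr => k _; rewrite /s; ring.
  have := ler_wpM2l (ltW e0) hS.
  have -> : eta * (144 * eta * C ^+ 2) = (12 * eta * C) ^+ 2 by ring.
  done.
have hst := stab i x0 (_ : 0 < 12 * eta * C) (_ : 12 * eta * C <= 2/45) hs2 hpos hsum i.
have [d0 d45] : 0 < 12 * eta * C /\ 12 * eta * C <= 2/45.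
  by split; rewrite -mulrA; lra.
move: (hst d0 d45); rewrite ee.
set e := a1 i / a2 i - 1 => he.
have ye : a2 i * (1 + e) = a1 i by rewrite /e; field; rewrite gt_eqF.
move: he; rewrite ler_norml => /andP[el eu].
have xi := x0 i; have yi := y0 i.
have hc0 : 0 <= eta * C * a1 i by rewrite mulr_ge0 // ltW.
have yb : 0 <= a2 i * (1 + e - 13/15).
  apply: mulr_ge0; first exact: ltW. lra.
have ha : 0 <= a2 i * (36 * (eta * C) - e).
  apply: mulr_ge0; first exact: ltW. lra.
have hb : 0 <= a2 i * (e + 36 * (eta * C)).
  apply: mulr_ge0; first exact: ltW. lra.
have hcy : 0 <= eta * C * (15 * a1 i - 13 * a2 i).
  apply: mulr_ge0; first exact: ltW. lra.
rewrite ler_norml; apply/andP; split; lra.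
Qed.
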